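(* Let $a,b,e\in\mathbb Z$ with $a\neq0$, $e>0$, such that $h_2(j)=aj^2+bj+e$ satisfies $h_2(j)\ge0$ for all integers $j\ge0$ (so $h_2\in\mathcal H_0$). If $b<0$ and $b^2>4ae$, then $\operatorname{hdepth}(h_2)\le 13$.
   Context: Let $\mathcal H_0$ denote the set of functions $h:\mathbb Z_{\ge 0}\to\mathbb Z_{\ge 0}$ with $h(0)>0$. For $h\in\mathcal H_0$ and integers $0\le k\le d$, put $\beta_k^d(h)=\sum_{j=0}^k(-1)^{k-j}\binom{d-j}{k-j}h(j)$. The Hilbert depth of $h$ is $\operatorname{hdepth}(h)=\max\{d\in\mathbb Z_{\ge0}:\ \beta_k^d(h)\ge 0\text{ for all }0\le k\le d\}$; this set contains $d=0$ and is known to be bounded above by $\lfloor h(1)/h(0)\rfloor$, so the maximum exists. *)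

(* Defs.v *)
From mathcomp Require Import all_boot all_order all_algebra.
Set Implicit Arguments. Unset Strict Implicit. Unset Printing Implicit Defensive.
Import Order.TTheory GRing.Theory Num.Theory.
Local Open Scope ring_scope.

Definition beta (h : nat -> nat) (d k : nat) : int :=
  \sum_(j < k.+1) (-1) ^+ (k - j)%N * ('C(d - j, k - j))%:Z * (h j)%:Z.

Definition hdepth_adm (h : nat -> nat) (d : nat) : Prop :=
  forall k : nat, (k <= d)%N -> 0 <= beta h d k.

(* hdepth h <= n  iff  every admissible d is <= n (hdepth is the max of the admissible d) *)
Definition hdepth_le (h : nat -> nat) (n : nat) : Prop :=
  forall d : nat, hdepth_adm h d -> (d <= n)%N.

(* Main.v *)
Require Import Defs.
From mathcomp Require Import all_boot all_order all_algebra.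
From mathcomp Require Import zify ring lra.
Import Order.TTheory GRing.Theory Num.Theory.
Local Open Scope ring_scope.

Lemma bin2n n : ('C(n.+2, 2) * 2 = (n + 2) * (n + 1))%N.
Proof.
elim: n => [//|n IH]. rewrite binS bin1 mulnDl IH. lia.
Qed.

Lemma bin3n n : ('C(n.+3, 3) * 6 = (n + 3) * (n + 2) * (n + 1))%N.
Proof.
elim: n => [//|n IH]. rewrite binS mulnDl IH.
have := bin2n n.+1. nia.
Qed.

Lemma bin2z n : ('C(n.+2, 2))%:Z * 2 = (n%:Z + 2) * (n%:Z + 1).
Proof. have := bin2n n. lia. Qed.

Lemma bin3z n : ('C(n.+3, 3))%:Z * 6 = (n%:Z + 3) * (n%:Z + 2) * (n%:Z + 1).
Proof. have := bin3n n. nia. Qed.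

Theorem theorem2p9 (a b e : int) (h2 : nat -> nat) :
  a != 0 -> 0 < e ->
  (forall j : nat, (h2 j)%:Z = a * (j%:Z) ^+ 2 + b * j%:Z + e) ->
  b < 0 -> b ^+ 2 > 4 * a * e ->
  hdepth_le h2 13.
Proof.
move=> _ e0 hE _ _ d adm.
rewrite leqNgt; apply/negP => d14.
have [n dn] : exists n, d = n.+3 by exists (d - 3)%N; lia.
have H1 := adm 1%N ltac:(lia).
have H2 := adm 2%N ltac:(lia).
have H3 := adm 3%N ltac:(lia).
move: H1 H2 H3; rewrite dn /beta !big_ord_recr big_ord0 /=.
rewrite !subSS !subn0 !bin0 !bin1 !hE.
have B2 := bin2z n.
have B2' := bin2z n.+1.
have B3 := bin3z n.
set N := n%:Z.
have n11 : 11 <= N by rewrite /N; lia.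
rewrite !big_ord0.
have E3 : (n.+3)%:Z = N + 3 by rewrite /N; lia.
have E2 : (n.+2)%:Z = N + 2 by rewrite /N; lia.
have E1 : (n.+1)%:Z = N + 1 by rewrite /N; lia.
rewrite E3 E2 E1 in B2' * => H1 H2 H3.
rewrite -/N in B2 B2' B3 H1 H2 H3.
move: B2 B2' B3 H1 H2 H3.
set X := ('C(n.+3, 2))%:Z. set Y := ('C(n.+2, 2))%:Z. set Z := ('C(n.+3, 3))%:Z.
move=> B2 B2' B3 H1 H2 H3.
set b1 := (X in 0 <= X) in H1.
set b2 := (X in 0 <= X) in H2.
set b3 := (X in 0 <= X) in H3.
have key : 3 * (N + 1) * (N - 4) * b1 + 6 * (N - 2) * b2 + 6 * b3 =
   - ((N - 11) ^+ 3 + 30 * (N - 11) ^+ 2 + 281 * (N - 11) + 792) * e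
   + 3 * (N - 2) * e * (X * 2 - (N + 1 + 2) * (N + 1 + 1))
   + 3 * (a + b + e) * (Y * 2 - (N + 2) * (N + 1))
   - e * (Z * 6 - (N + 3) * (N + 2) * (N + 1)).
  rewrite /b1 /b2 /b3; ring.
rewrite B2 B2' B3 !subrr !mulr0 subr0 !addr0 in key.
have M0 : 0 <= N - 11 by lra.
have P : 0 < (N - 11) ^+ 3 + 30 * (N - 11) ^+ 2 + 281 * (N - 11) + 792.
  have := exprn_ge0 3 M0; have := exprn_ge0 2 M0; lra.
have L : 0 <= 3 * (N + 1) * (N - 4) * b1 + 6 * (N - 2) * b2 + 6 * b3.
  apply: addr_ge0; last by apply: mulr_ge0.
  apply: addr_ge0; apply: mulr_ge0 => //; apply: mulr_ge0 => //; try apply: mulr_ge0; lra.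
have := mulr_gt0 P e0. lra.
Qed.
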